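(* Suppose Assumption A holds and let $\{x^k\}$ be an infinite sequence generated by Algorithm 1 with $G_k\in\mathcal{S}_{\ell,\mu}(F,x^k)$ for all $k$ (fixed $\ell\in K$, $\mu\in\mathrm{int}(K)$). Then $\{x^k\}$ has at least one accumulation point, and every accumulation point of $\{x^k\}$ is a $K$-stationary point of $\min_K F(x)$.
   Context: $K\subset\mathbb{R}^m$ is a closed, convex, pointed cone with nonempty interior; $y\preceq_K y'$ means $y'-y\in K$. $K^*=\{c:\langle c,y\rangle\ge0\ \forall y\in K\}$, and $C$ is a compact convex set with $0\notin C$, $\mathrm{cone}(C)=K^*$. $F:\mathbb{R}^n\to\mathbb{R}^m$ is differentiable with Jacobian $JF$. A point $x^*$ is $K$-stationary if $\mathrm{range}(JF(x^* ))\cap(-\mathrm{int}(K))=\emptyset$. For differentiable $\Phi$: strongly $K$-convex with $\mu\in K$ means $J\Phi(x)(y-x)+\tfrac12\|y-x\|^2\mu\preceq_K\Phi(y)-\Phi(x)$ for all $x,y$; $K$-smooth with $\ell\in K$ means $\Phi(y)-\Phi(x)\preceq_K J\Phi(x)(y-x)+\tfrac12\|y-x\|^2\ell$ for all $x,y$. Surrogate class $\mathcal{S}_{\ell,\mu}(F,x^k)$ ($\ell\in K$, $\mu\in\mathrm{int}(K)$): differentiable $G_k$ strongly $K$-convex with $\mu$ such that, with $x^{k+1}$ the minimizer of $x\mapsto\max_{c^*\in C}\langle c^*,G_k(x)\rangle$ and $H_k:=G_k-F+F(x^k)$: $F(x^{k+1})-F(x^k)\preceq_K G_k(x^{k+1})$;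 $H_k$ is $K$-smooth with $\ell$, $H_k(x^k)=0$, $JH_k(x^k)=0$. Algorithm 1: from $x^0$, for $k=0,1,\dots$ choose $G_k\in\mathcal{S}_{\ell,\mu}(F,x^k)$ and set $x^{k+1}:=\arg\min_{x}\max_{c^*\in C}\langle c^*,G_k(x)\rangle$; stop if $x^{k+1}=x^k$. Assumption A: (i) the level set $\mathcal{L}_F(x^0)=\{x:F(x)\preceq_K F(x^0)\}$ is bounded; (ii) whenever $\mathcal{K}$ is an infinite index set with $x^k\to x^*$ along $\mathcal{K}$, $G_k\in\mathcal{S}_{\ell,\mu}(F,x^k)$, and $\max_{c^*\in C}\langle c^*,G_k(x^{k+1})\rangle\to0$ along $\mathcal{K}$, then $x^*$ is $K$-stationary. *)

(* Defs.v *)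
From HB Require Import structures.
From mathcomp Require Import all_boot all_order all_algebra.
From mathcomp Require Import all_classical all_reals all_analysis.
Set Implicit Arguments. Unset Strict Implicit. Unset Printing Implicit Defensive.
Import Order.TTheory GRing.Theory Num.Theory.
Import numFieldNormedType.Exports.
Local Open Scope classical_set_scope.
Local Open Scope ring_scope.

Section Defs.
Variable R : realType.

Definition dotv (p : nat) (c y : 'rV[R]_p) : R := \sum_(i < p) c ord0 i * y ord0 i.
Definition sqnorm (p : nat) (v : 'rV[R]_p) : R := dotv v v.

Definition Kle (m : nat) (K : set 'rV[R]_m) (y y' : 'rV[R]_m) : Prop := K (y' - y).

Definition convex_set_ (p : nat) (A : set 'rV[R]_p) : Prop :=
  forall x y t, A x -> A y -> 0 <= t -> t <= 1 -> A (t *: x + (1 - t) *: y).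

Definition is_cone (p : nat) (A : set 'rV[R]_p) : Prop :=
  forall t x, 0 <= t -> A x -> A (t *: x).

Definition pointed (p : nat) (A : set 'rV[R]_p) : Prop :=
  forall x, A x -> A (- x) -> x = 0.

Definition good_cone (m : nat) (K : set 'rV[R]_m) : Prop :=
  [/\ closed K, is_cone K, convex_set_ K, pointed K & interior K !=set0].

Definition dual_cone (m : nat) (K : set 'rV[R]_m) : set 'rV[R]_m :=
  [set c | forall y, K y -> 0 <= dotv c y].

Definition cone_hull (m : nat) (C : set 'rV[R]_m) : set 'rV[R]_m :=
  [set y | y = 0 \/ exists t c, 0 < t /\ C c /\ y = t *: c].

Definition phiC (m : nat) (C : set 'rV[R]_m) (v : 'rV[R]_m) : R :=
  sup [set dotv c v | c in C].

Definition is_argmin (n : nat) (f : 'rV[R]_n -> R) (z : 'rV[R]_n) : Prop :=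
  forall x, f z <= f x.

Definition K_stationary (n m : nat) (K : set 'rV[R]_m)
  (F : 'rV[R]_n -> 'rV[R]_m) (xs : 'rV[R]_n) : Prop :=
  forall d : 'rV[R]_n, ~ (interior K) (- ('d F xs d)).

Definition strongly_K_convex (n m : nat) (K : set 'rV[R]_m)
  (Phi : 'rV[R]_n -> 'rV[R]_m) (mu : 'rV[R]_m) : Prop :=
  forall x y, Kle K ('d Phi x (y - x) + (2^-1 * sqnorm (y - x)) *: mu) (Phi y - Phi x).

Definition K_smooth (n m : nat) (K : set 'rV[R]_m)
  (Phi : 'rV[R]_n -> 'rV[R]_m) (l : 'rV[R]_m) : Prop :=
  forall x y, Kle K (Phi y - Phi x) ('d Phi x (y - x) + (2^-1 * sqnorm (y - x)) *: l).

Definition surrogate (n m : nat) (K C : set 'rV[R]_m) (l mu : 'rV[R]_m)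
  (F : 'rV[R]_n -> 'rV[R]_m) (xk : 'rV[R]_n) (G : 'rV[R]_n -> 'rV[R]_m) : Prop :=
  let H := fun x => G x - F x + F xk in
  (forall x, differentiable G x) /\
  strongly_K_convex K G mu /\
  (forall z, is_argmin (fun x => phiC C (G x)) z -> Kle K (F z - F xk) (G z)) /\
  K_smooth K H l /\
  H xk = 0 /\
  (forall v, 'd H xk v = 0).

Definition acc_point (n : nat) (u : nat -> 'rV[R]_n) (xs : 'rV[R]_n) : Prop :=
  exists sigma : nat -> nat, (forall j, (sigma j < sigma j.+1)%N) /\
    (fun j => u (sigma j)) @ \oo --> xs.

End Defs.

(* Main.v *)
Require Import Defs.
From HB Require Import structures.
From mathcomp Require Import all_boot all_order all_algebra.
From mathcomp Require Import all_classical all_reals all_analysis.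
From mathcomp Require Import ring lra.
Import Order.TTheory GRing.Theory Num.Theory.
Import numFieldNormedType.Exports.
Local Open Scope classical_set_scope.
Local Open Scope ring_scope.
Fixpoint mk_sig (g : nat * nat -> nat) (j : nat) : nat :=
  match j with 0 => g (0, 0)%N | j'.+1 => g (mk_sig g j', j) end.

Section S.
Context (R : realType).
Lemma dotvB p (c u v : 'rV[R]_p) : dotv c (u - v) = dotv c u - dotv c v.
Proof. by rewrite /dotv -sumrB; apply: eq_bigr => i _; rewrite !mxE mulrBr. Qed.
Lemma dotvD p (c u v : 'rV[R]_p) : dotv c (u + v) = dotv c u + dotv c v.
Proof. by rewrite /dotv -big_split; apply: eq_bigr => i _; rewrite !mxE mulrDr. Qed.
Lemma dotv0r p (c : 'rV[R]_p) : dotv c 0 = 0.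
Proof. by rewrite /dotv big1 // => i _; rewrite mxE mulr0. Qed.
Lemma dotv0l p (c : 'rV[R]_p) : dotv 0 c = 0.
Proof. by rewrite /dotv big1 // => i _; rewrite mxE mul0r. Qed.
Lemma dotvZl p t (c v : 'rV[R]_p) : dotv (t *: c) v = t * dotv c v.
Proof. by rewrite /dotv mulr_sumr; apply: eq_bigr => i _; rewrite mxE mulrA. Qed.
Lemma dotvZr p t (c v : 'rV[R]_p) : dotv c (t *: v) = t * dotv c v.
Proof. by rewrite /dotv mulr_sumr; apply: eq_bigr => i _; rewrite mxE mulrCA. Qed.
Lemma dotvNl p (c v : 'rV[R]_p) : dotv (- c) v = - dotv c v.
Proof. by rewrite -scaleN1r dotvZl mulN1r. Qed.
Lemma sqnormZ p t (v : 'rV[R]_p) : sqnorm (t *: v) = t * t * sqnorm v.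
Proof. by rewrite /sqnorm dotvZl dotvZr mulrA. Qed.
Lemma dotvC p (c v : 'rV[R]_p) : dotv c v = dotv v c.
Proof. by apply: eq_bigr => i _; rewrite mulrC. Qed.

Lemma cont_sum p (f : 'I_p -> 'rV[R]_p -> R) :
  (forall i, continuous (f i)) -> continuous (fun v => \sum_i f i v).
Proof.
move=> fc; rewrite -fct_sumE.
elim/big_ind: _ => //.
- by move=> x; apply: cst_continuous.
- by move=> g h gc hc x; exact: (continuousD (gc x) (hc x)).
Qed.

Lemma dotv_cont p (c : 'rV[R]_p) : continuous (dotv c).
Proof.
apply: cont_sum => i x.
exact: (continuousM (@cst_continuous _ _ (c ord0 i) x) (@coord_continuous R 1 p ord0 i x)).
Qed.
Lemma dotv_contl p (v : 'rV[R]_p) : continuous (fun c => dotv c v).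
Proof.
apply: cont_sum => i x.
exact: (continuousM (@coord_continuous R 1 p ord0 i x) (@cst_continuous _ _ (v ord0 i) x)).
Qed.

Lemma sqnorm_cont p : continuous (@sqnorm R p).
Proof.
apply: cont_sum => i x.
exact: (continuousM (@coord_continuous R 1 p ord0 i x) (@coord_continuous R 1 p ord0 i x)).
Qed.

Lemma sqnorm_ge p (w : 'rV[R]_p) i : w ord0 i * w ord0 i <= sqnorm w.
Proof.
rewrite /sqnorm /dotv (bigD1 i) //= lerDl sumr_ge0 // => j _.
by rewrite -expr2 sqr_ge0.
Qed.

Lemma sqnorm_ge0 p (w : 'rV[R]_p) : 0 <= sqnorm w.
Proof. by rewrite sumr_ge0 // => j _; rewrite -expr2 sqr_ge0. Qed.

Lemma sqnorm_eq0 p (w : 'rV[R]_p) : sqnorm w <= 0 -> w = 0.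
Proof.
move=> h; have h0 : sqnorm w = 0 by apply/le_anti; rewrite h sqnorm_ge0.
apply/rowP => i; rewrite mxE.
have nn : forall j : 'I_p, xpredT j -> 0 <= w ord0 j * w ord0 j.
  by move=> j _; rewrite -expr2 sqr_ge0.
have := @psumr_eq0P R _ xpredT (fun i => w ord0 i * w ord0 i) nn h0 i isT.
by move/eqP; rewrite mulf_eq0 orbb => /eqP.
Qed.

Lemma sqnormB p (a b : 'rV[R]_p) :
  sqnorm (a - b) = sqnorm a - 2 * dotv a b + sqnorm b.
Proof.
rewrite /sqnorm /dotv mulr_sumr -sumrB -big_split /=.
by apply: eq_bigr => i _; rewrite !mxE; ring.
Qed.

Lemma abs_le_sq (w : R) : `|w| <= w * w + 1.
Proof.
have [h|h] := lerP `|w| 1.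
  by apply: le_trans h _; rewrite lerDr -expr2 sqr_ge0.
have e : `|w| * `|w| = w * w by rewrite -normrM ger0_norm // -expr2 sqr_ge0.
rewrite -e; nra.
Qed.

Lemma small_t (a s : R) : 0 <= s ->
  (forall t, 0 < t -> t <= 1 -> 2 * t * a <= t * t * s) -> a <= 0.
Proof.
move=> s0 h; rewrite leNgt; apply/negP => a0.
have sa : 0 < s + a by rewrite ltr_wpDl.
pose t := a / (s + a).
have t0 : 0 < t by rewrite divr_gt0.
have t1 : t <= 1 by rewrite ler_pdivrMr // mul1r lerDr.
have := h t t0 t1.
have -> : 2 * t * a = t * (2 * a) by ring.
have -> : t * t * s = t * (t * s) by ring.
rewrite ler_pM2l // => H.
have : t * s < 2 * a.
  rewrite /t mulrAC ltr_pdivrMr // .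
  have : a * s < 2 * a * (s + a) by nra.
  by [].
by rewrite ltNge H.
Qed.

Lemma bipolar m (K : set 'rV[R]_m) (v : 'rV[R]_m) :
  closed K -> is_cone K -> convex_set_ K -> K !=set0 ->
  (forall c, dual_cone K c -> 0 <= dotv c v) -> K v.
Proof.
move=> Kcl Kcone Kcvx [y0 Ky0] hv.
have K0 : K 0 by have := Kcone 0 y0 (lexx 0) Ky0; rewrite scale0r.
have [//|nKv] := pselect (K v).
pose f := fun y => sqnorm (v - y).
have fc : continuous f.
  move=> y; apply: continuous_comp; last exact: sqnorm_cont.
  by apply: continuousB; [exact: cst_continuous | exact: cvg_id].
pose S := sqnorm v.
pose A := K `&` (f @^-1` [set r | r <= S]).
have A0 : A 0 by split => //; rewrite /f /= subr0.
have Acl : closed A.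
  apply: closedI => //; apply: preimage_closed; last exact: closed_le.
  by move=> y _; apply: fc.
have Abd : bounded_set A.
  rewrite /bounded_set /= /bounded_near.
  near=> M => y [_ /= Ay].
  have S0 : 0 <= S by apply: sqnorm_ge0.
  have HM : 2 * S + 2 <= M by near: M; apply: nbhs_pinfty_ge; rewrite num_real.
  rewrite [leLHS]/Num.norm /= mx_normrE; apply: bigmax_le => [|[i j] _] /=.
    by apply: le_trans HM; lra.
  rewrite (ord1 i).
  have e : y ord0 j = v ord0 j - (v - y) ord0 j by rewrite !mxE; ring.
  rewrite e; apply: le_trans (ler_normB _ _) _.
  have h1 := abs_le_sq (v ord0 j); have h2 := abs_le_sq ((v - y) ord0 j).
  have h3 := @sqnorm_ge _ v j; have h4 := @sqnorm_ge _ (v - y) j.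
  rewrite /f /= in Ay; rewrite -/S in h3.
  apply: le_trans HM; lra.
have Acp : compact A by apply: bounded_closed_compact.
have [p pA pmin] := compact_EVT_min (ex_intro _ 0 A0) Acp (continuous_subspaceT fc).
move: pA; rewrite inE => -[Kp _].
have pminK : forall y, K y -> f p <= f y.
  move=> y Ky; have [yA|nyA] := pselect ((f @^-1` [set r | r <= S]) y).
    by apply: pmin; rewrite inE.
  apply: le_trans (pmin 0 _) _; first by rewrite inE.
  rewrite /f subr0 -/S; apply: ltW; rewrite ltNge; apply/negP => h; exact: nyA h.
pose w := v - p.
have var : forall y, K y -> dotv w (y - p) <= 0.
  move=> y Ky; apply: (@small_t _ (sqnorm (y - p))); first exact: sqnorm_ge0.
  move=> t t0 t1.
  have Kz := Kcvx y p t Ky Kp (ltW t0) t1.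
  have := pminK _ Kz; rewrite /f -/w.
  have -> : v - (t *: y + (1 - t) *: p) = w - t *: (y - p).
    by apply/rowP => i; rewrite !mxE; ring.
  rewrite [sqnorm (w - _)]sqnormB sqnormZ dotvZr; nra.
have wp0 : dotv w p = 0.
  have h1 := var 0 K0.
  have h2 := var (2 *: p) (Kcone 2 p (ler0n _ 2) Kp).
  rewrite dotvB dotv0r in h1; rewrite dotvB dotvZr in h2; lra.
have dual : dual_cone K (- w).
  move=> y Ky; have := var y Ky; rewrite dotvB wp0 subr0 dotvNl; lra.
have := hv _ dual; rewrite dotvNl.
have ev : v = w + p by rewrite /w subrK.
rewrite [X in dotv w X]ev dotvD wp0 addr0 oppr_ge0 => /sqnorm_eq0 w0.
by rewrite ev w0 add0r.
Unshelve. all: end_near.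
Qed.

Lemma seq_cpt n (A : set 'rV[R]_n) (u : nat -> 'rV[R]_n) :
  compact A -> (forall k, A (u k)) -> exists xs, acc_point u xs.
Proof.
move=> Acp Au.
have FA : (u @ \oo) A by exists 0%N => // k _; exact: Au.
have [xs [Axs cl]] := Acp (u @ \oo) _ FA.
have key : forall N (e : R), 0 < e -> exists k, (N < k)%N /\ `|xs - u k| < e.
  move=> N e e0.
  have [_ [[k /= Nk <-] bk]] := cl (u @` [set k | (N < k)%N]) (ball xs e)
     (ex_intro2 _ _ N.+1 I (fun k Nk => ex_intro2 _ _ k Nk erefl)) (nbhsx_ballx xs e e0).
  by exists k; split => //; rewrite -ball_normE in bk.
have /choice [g Hg] : forall Nj : nat * nat, exists k,
    (Nj.1 < k)%N /\ `|xs - u k| < (Nj.2.+1%:R)^-1.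
  by move=> [N j]; apply: key; rewrite invr_gt0 ltr0n.
exists xs, (mk_sig g); split.
  by move=> j; have [] := Hg (mk_sig g j, j.+1).
have hj : forall j, `|xs - u (mk_sig g j)| < (j.+1%:R)^-1.
  by case=> [|j]; [have [] := Hg (0, 0)%N | have [] := Hg (mk_sig g j, j.+1)].
apply/cvgrPdist_lt => e e0; near=> j.
apply: lt_trans (hj j) _; rewrite invf_plt ?posrE ?ltr0n //.
apply: le_lt_trans (_ : j%:R < j.+1%:R); last by rewrite ltr_nat.
by near: j; apply: nbhs_infty_ger; rewrite num_real.
Unshelve. all: end_near.
Qed.

Lemma noninc (a : nat -> R) : (forall k, a k.+1 <= a k) ->
  forall n m, (n <= m)%N -> a m <= a n.
Proof.
move=> h n m; elim: m => [|m IH]; first by rewrite leqn0 => /eqP ->.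
rewrite leq_eqVlt => /orP [/eqP -> //|]; rewrite ltnS => /IH; exact: le_trans (h m).
Qed.

Lemma Kadd m (K : set 'rV[R]_m) a b : is_cone K -> convex_set_ K ->
  K a -> K b -> K (a + b).
Proof.
move=> Kc Kv Ka Kb.
have h0 : (0 : R) <= 2^-1 by rewrite invr_ge0 ler0n.
have h1 : (2 : R)^-1 <= 1 by rewrite invf_le1 ?ltr0n // ler1n.
have E : 2 *: (2^-1 *: a + (1 - 2^-1) *: b) = a + b.
  by apply/rowP => i; rewrite !mxE; field.
by rewrite -E; apply: Kc (ler0n _ 2) (Kv a b 2^-1 Ka Kb h0 h1).
Qed.
End S.

Theorem theorem1 (R : realType) (n m : nat)
  (K C : set 'rV[R]_m) (F : 'rV[R]_n -> 'rV[R]_m) (l mu : 'rV[R]_m)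
  (x : nat -> 'rV[R]_n) (G : nat -> 'rV[R]_n -> 'rV[R]_m) :
  good_cone K ->
  compact C -> convex_set_ C -> ~ C 0 -> cone_hull C = dual_cone K ->
  (forall z, differentiable F z) ->
  K l -> interior K mu ->
  (forall k, surrogate K C l mu F (x k) (G k)) ->
  (forall k, is_argmin (fun z => phiC C (G k z)) (x k.+1)) ->
  (forall k, x k.+1 <> x k) ->
  bounded_set [set z | Kle K (F z) (F (x 0%N))] ->
  (forall (sigma : nat -> nat) (xs : 'rV[R]_n),
      (forall j, (sigma j < sigma j.+1)%N) ->
      (fun j => x (sigma j)) @ \oo --> xs ->
      (fun j => phiC C (G (sigma j) (x (sigma j).+1))) @ \oo --> (0 : R) ->
      K_stationary K F xs) ->
  (exists xs, acc_point x xs) /\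
  (forall xs, acc_point x xs -> K_stationary K F xs).
Proof.
move=> [Kcl Kcone Kcvx Kpt [y0 /interior_subset Ky0]] Ccp Ccvx nC0 hull Fd Kl Kmu
  sur argm neq Lbd Aii.
have Fc : continuous F := fun z => differentiable_continuous (Fd z).
have K0 : K 0 by have := Kcone 0 y0 (lexx 0) Ky0; rewrite scale0r.
have G0 : forall k, G k (x k) = 0.
  move=> k; have [_ [_ [_ [_ [H0 _]]]]] := sur k.
  by move: H0 => /=; rewrite subrK.
have Cdual : forall c, C c -> dual_cone K c.
  move=> c Cc; rewrite -hull; right; exists 1, c; split; first exact: ltr01.
  by split => //; rewrite scale1r.
have phiC_le : forall c v, C c -> dotv c v <= phiC C v.
  move=> c v Cc; apply: sup_upper_bound; last by exists c.
  apply: compact_has_sup; first by exists (dotv c v), c.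
  apply: continuous_compact => //; apply: continuous_subspaceT; exact: dotv_contl.
have phiC0 : forall c, C c -> phiC C 0 = 0.
  move=> c Cc; rewrite /phiC.
  have -> : [set dotv c' 0 | c' in C] = [set 0].
    apply/seteqP; split => [r [c' _ <-]|r ->] /=; first by rewrite dotv0r.
    by exists c => //; rewrite dotv0r.
  exact: sup1.
have phi_np : forall c k, C c -> phiC C (G k (x k.+1)) <= 0.
  by move=> c k Cc; rewrite -(phiC0 c Cc) -(G0 k); apply: argm.
have key : forall c k, C c ->
    dotv c (F (x k.+1)) - dotv c (F (x k)) <= phiC C (G k (x k.+1)).
  move=> c k Cc; apply: le_trans (phiC_le _ _ Cc).
  have [_ [_ [H3 _]]] := sur k.
  have := Cdual c Cc _ (H3 _ (argm k)).
  by rewrite !dotvB; lra.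
have dec : forall c k, C c -> dotv c (F (x k.+1)) <= dotv c (F (x k)).
  move=> c k Cc; have := le_trans (key c k Cc) (phi_np c k Cc).
  by rewrite subr_le0.
split.
  have lev : forall k, K (F (x 0%N) - F (x k)).
    elim=> [|k IH]; first by rewrite subrr.
    have -> : F (x 0%N) - F (x k.+1) = (F (x 0%N) - F (x k)) + (F (x k) - F (x k.+1)).
      by rewrite addrA subrK.
    apply: Kadd => //; apply: bipolar => //; first by exists y0.
    move=> c; rewrite -hull => -[->|[t [c' [t0 [Cc' ->]]]]]; first by rewrite dotv0l.
    rewrite dotvZl; apply: mulr_ge0; first exact: ltW.
    rewrite dotvB subr_ge0; exact: dec.
  have Lcl : closed [set z | Kle K (F z) (F (x 0%N))].
    rewrite /Kle.
    apply: (preimage_closed (f := fun z => F (x 0%N) - F z)) => // z _.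
    by apply: continuousB; [exact: cst_continuous | exact: Fc].
  have := bounded_closed_compact Lbd Lcl.
  by move=> /seq_cpt; apply => k; exact: lev.
move=> xs [sig [sinc scvg]].
apply: (Aii sig xs sinc scvg).
have [[c0 Cc0]|C0] := pselect (C !=set0); last first.
  have -> : (fun j => phiC C (G (sig j) (x (sig j).+1))) = fun=> 0.
    apply: funext => j; rewrite /phiC.
    have -> : C = set0 by apply/seteqP; split => // c Cc; apply: C0; exists c.
    by rewrite image_set0 sup0.
  exact: cvg_cst.
pose a := fun k => dotv c0 (F (x k)).
have anon := @noninc _ a (fun k => dec c0 k Cc0).
have acvg : (fun j => a (sig j)) @ \oo --> dotv c0 (F xs).
  apply: (@cvg_comp _ _ _ (fun j => x (sig j)) (fun z => dotv c0 (F z)) _ (nbhs xs)); first exact: scvg.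
  exact: (continuous_comp (Fc xs) (@dotv_cont R m c0 (F xs))).
apply: (@squeeze_cvgr _ _ _ _ (fun j => a (sig j.+1) - a (sig j)) (fun=> 0)).
- near=> j; apply/andP; split; last exact: phi_np Cc0.
  apply: le_trans (key c0 (sig j) Cc0); rewrite lerD2r; apply: anon; exact: sinc.
- rewrite -(subrr (dotv c0 (F xs))); apply: cvgB => //.
  by rewrite (cvg_shiftS (fun j => a (sig j))).
- exact: cvg_cst.
Unshelve. all: end_near.
Qed.
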